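(* There exists $\delta>0$ such that the family of NSG-compositions $x_1+\cdots+x_{m-1}$ with maximum $4$ whose last maximal part $x_l=4$ (i.e. $x_l=4$ and $x_i\le3$ for $i>l$) satisfies $m-1-l\le\delta(m-1)$ has growth-rate strictly smaller than $\omega=\frac{1+\sqrt5}2$.
   Context: An NSG-composition is a composition $x_1+\cdots+x_{m-1}$ of positive integers satisfying $x_{s+t}\le x_s+x_t$ and $x_{m-s-t}\le x_{m-s}+x_{m-t}+1$ for all $s,t\ge1$, $s+t<m$ (equivalently, the Kunz vector of a numerical semigroup of multiplicity $m$); its genus is $\sum x_j$. The growth-rate of a family is $\limsup_{g\to\infty}a_g^{1/g}$ with $a_g$ the number of members of genus $g$. *)

(* Defs.v *)
From HB Require Import structures.
From mathcomp Require Import all_boot all_order all_algebra.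
From mathcomp Require Import all_classical all_reals all_analysis.
Set Implicit Arguments. Unset Strict Implicit. Unset Printing Implicit Defensive.
Import Order.TTheory GRing.Theory Num.Theory.

(* A composition x_1 + ... + x_{m-1} is a list x of size m-1; x_j (1-based)
   is [xj x j] = nth 0 x (j-1). *)
Definition xj (x : seq nat) (j : nat) : nat := nth 0 x j.-1.

(* NSG condition (Kunz vector of a numerical semigroup of multiplicity m). *)
Definition nsg (x : seq nat) : bool :=
  let m := (size x).+1 in
  all (fun s => all (fun t =>
        (s + t < m) ==>
        ((xj x (s + t) <= xj x s + xj x t) &&
         (xj x (m - s - t) <= xj x (m - s) + xj x (m - t) + 1)))
      (iota 1 m)) (iota 1 m).

Definition is_comp (x : seq nat) : bool := all (fun k => 0 < k) x.

Definition genus (x : seq nat) : nat := sumn x.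

Fixpoint seqs_len (n b : nat) : seq (seq nat) :=
  match n with
  | 0 => [:: [::]]
  | n'.+1 => [seq k :: s | k <- iota 0 b.+1, s <- seqs_len n' b]
  end.

(* Every composition of genus g has at most g parts, each at most g, so it
   occurs exactly once in this list. *)
Definition candidates (g : nat) : seq (seq nat) :=
  flatten [seq seqs_len n g | n <- iota 0 g.+1].

Definition count_genus (P : pred (seq nat)) (g : nat) : nat :=
  count (fun x => [&& is_comp x, genus x == g & P x]) (candidates g).

Definition growth_rate (R : realType) (P : pred (seq nat)) : \bar R :=
  limn_esup (fun g => (((count_genus P g)%:R : R) `^ (g%:R^-1))%:E).

Definition fam (R : realType) (delta : R) (x : seq nat) : bool :=
  [&& nsg x, \max_(i <- x) i == 4 &
   has (fun l => [&& 1 <= l, l <= size x, xj x l == 4,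
                  all (fun i => xj x i <= 3) (iota l.+1 (size x - l)) &
                  ((size x - l)%:R <= delta * (size x)%:R)%R])
       (iota 0 (size x).+1)].

(* Main.v *)
Require Import Defs.
From mathcomp Require Import all_boot all_order all_algebra.
From mathcomp Require Import all_classical all_reals all_analysis.
Import Order.TTheory GRing.Theory Num.Theory.
From mathcomp Require Import ring lra zify.
Set Implicit Arguments. Unset Strict Implicit. Unset Printing Implicit Defensive.


Section Words.
Variable T : eqType.

Fixpoint nk_words (A : seq T) (k : nat) : seq (seq T) :=
  if k is k'.+1 then [seq a :: s | a <- A, s <- nk_words A k'] else [:: [::]].

Lemma nk_words_mem A k s : (s \in nk_words A k) = (size s == k) && all (mem A) s.
Proof.
elim: k s => [|k IH] s.
  by case: s.
apply/allpairsP/idP.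
  by case=> -[a t] /= [aA]; rewrite IH => /andP[/eqP <- tA] ->; rewrite /= eqxx aA.
case: s => [|a s] //= /andP[sk /andP[aA sA]].
by exists (a, s); rewrite /= IH -(eqSS (size s)) sk sA aA.
Qed.

Lemma nk_words_size A k s : s \in nk_words A k -> size s = k.
Proof. by rewrite nk_words_mem => /andP[/eqP]. Qed.

Lemma nk_words_uniq A k : uniq A -> uniq (nk_words A k).
Proof.
move=> uA; elim: k => [|k IH] //=.
apply: allpairs_uniq => //; by move=> [a s] [b t] _ _ /= [-> ->].
Qed.

End Words.

Section Sums.
Variable R : comRingType.
Variable T : eqType.
Local Open Scope ring_scope.

Lemma nk_sum_cat (A : seq T) a b (H : seq T -> R) :
  \sum_(s <- nk_words A (a + b)) H s =
  \sum_(u <- nk_words A a) \sum_(v <- nk_words A b) H (u ++ v).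
Proof.
elim: a H => [|a IH] H.
  by rewrite add0n big_seq1.
rewrite addSn /= !big_allpairs_dep /=; apply: eq_bigr => c _.
by rewrite (IH (fun s => H (c :: s))).
Qed.

Definition nk_wt (f : T -> R) (s : seq T) := \prod_(c <- s) f c.

Lemma nk_wt_cat f u v : nk_wt f (u ++ v) = nk_wt f u * nk_wt f v.
Proof. by rewrite /nk_wt big_cat. Qed.

Lemma nk_sum_wt (A : seq T) k f :
  \sum_(s <- nk_words A k) nk_wt f s = (\sum_(c <- A) f c) ^+ k.
Proof.
elim: k => [|k IH]; first by rewrite big_seq1 /nk_wt big_nil expr0.
rewrite /= big_allpairs_dep exprS mulr_suml; apply: eq_bigr => c _.
by rewrite -IH mulr_sumr; apply: eq_bigr => s _; rewrite /nk_wt big_cons.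
Qed.

Lemma nk_wt_if (q : pred T) f s :
  nk_wt (fun c => if q c then f c else 0) s = if all q s then nk_wt f s else 0.
Proof.
elim: s => [|c s IH]; first by rewrite /nk_wt !big_nil.
rewrite /nk_wt big_cons /= -/(nk_wt _ s) IH.
by case: (q c); case: (all q s); rewrite ?mul0r ?mulr0 ?big_cons.
Qed.

Lemma nk_if_mul (a b : bool) (x y : R) :
  (if a && b then x * y else 0) = (if a then x else 0) * (if b then y else 0).
Proof. by case: a; case: b; rewrite ?mul0r ?mulr0. Qed.

End Sums.

Definition nk_good (c : nat * nat) : bool := 4 <= c.1 + c.2.
Definition nk_good2 (c : nat * nat) : bool := nk_good c && (2 <= c.1).
Definition nk_K (c c' : nat * nat) : bool := (c'.1 <= c.1 + 1) && (c.2 <= c'.2 + 1).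
Definition nk_zipok (u w : seq (nat * nat)) : bool :=
  all (fun q => nk_K q.1 q.2) (zip u w).
Fixpoint nk_blk (d f : nat) (B : seq (nat * nat)) : bool :=
  if f is f'.+1 then nk_zipok (take d B) (take d (drop d B)) && nk_blk d f' (drop (d + d) B)
  else true.
Definition nk_AP : seq (nat * nat) := [seq (a, b) | a <- iota 1 4, b <- iota 1 4].
Definition nk_PW k := nk_words nk_AP k.

Lemma nk_words_S (T : eqType) (A : seq T) k :
  nk_words A k.+1 = [seq a :: s | a <- A, s <- nk_words A k].
Proof. by []. Qed.

Lemma nk_blk_nil d f : nk_blk d f [::].
Proof. by elim: f => //= f ->; rewrite /nk_zipok !take_nil. Qed.

Lemma nk_blk_fuel d f f' B : 0 < d -> size B <= f -> size B <= f' ->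
  nk_blk d f B = nk_blk d f' B.
Proof.
move=> d0; elim: f f' B => [|f IH] [|f'] B //=.
- by rewrite leqn0 => /nilP -> _; rewrite nk_blk_nil.
- by move=> _; rewrite leqn0 => /nilP ->; rewrite nk_blk_nil.
- move=> h1 h2; congr (_ && _); apply: IH; rewrite size_drop; lia.
Qed.

Lemma nk_blk_lag d B f : 0 < d ->
  (forall j, j + d < size B -> nk_K (nth (0,0) B j) (nth (0,0) B (j + d))) ->
  nk_blk d f B.
Proof.
move=> d0; elim: f B => [|f IH] B H //=.
apply/andP; split.
  apply/(all_nthP ((0,0),(0,0))) => j hj; rewrite nth_zip_cond hj.
  move: hj; rewrite size_zip !size_take_min size_drop => hj.
  rewrite /= nth_take; last by lia.
  rewrite nth_take; last by lia.
  rewrite nth_drop addnC; apply: H.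
  lia.
apply: IH => j; rewrite size_drop => hj.
rewrite !nth_drop; have -> : d + d + (j + d) = (d + d + j) + d by lia.
apply: H; lia.
Qed.

Section Bounds.
Variable R : realFieldType.
Local Open Scope ring_scope.
Variable r : R.

Definition nk_wr (c : nat * nat) : R := r ^+ (c.1 + c.2).
Definition nk_wP c := if nk_good c then nk_wr c else 0.
Definition nk_wP2 c := if nk_good2 c then nk_wr c else 0.
Definition nk_Pc := \sum_(c <- nk_AP) nk_wP c.
Definition nk_P2c := \sum_(c <- nk_AP) nk_wP2 c.
Definition nk_Qc := \sum_(c <- nk_AP) \sum_(c' <- nk_AP)
   (if nk_K c c' then nk_wP c * nk_wP c' else 0).
Definition nk_S d N := \sum_(B <- nk_PW N) (if nk_blk d N B then nk_wt nk_wP B else 0).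
Definition nk_Z a b := \sum_(u <- nk_PW a) \sum_(w <- nk_PW b)
   (if nk_zipok u w then nk_wt nk_wP u * nk_wt nk_wP w else 0).

Lemma nk_Z_diag b : nk_Z b b = nk_Qc ^+ b.
Proof.
elim: b => [|b IH].
  by rewrite /nk_Z /nk_PW /= !big_seq1 /nk_wt !big_nil mulr1 expr0.
rewrite exprS -IH /nk_Z /nk_Qc /nk_PW nk_words_S big_allpairs_dep mulr_suml.
apply: eq_bigr => c _.
under eq_bigr do rewrite big_allpairs_dep.
rewrite exchange_big mulr_suml; apply: eq_bigr => c' _.
rewrite mulr_sumr; apply: eq_bigr => u _.
rewrite mulr_sumr; apply: eq_bigr => w _.
rewrite /nk_zipok /= -/(nk_zipok u w) nk_if_mul /nk_wt !big_cons.
by case: (nk_K c c'); case: (nk_zipok u w); rewrite ?mul0r ?mulr0 //; ring.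
Qed.


Lemma nk_zipok_cat u1 u2 w : size u1 = size w -> nk_zipok (u1 ++ u2) w = nk_zipok u1 w.
Proof.
move=> h; rewrite /nk_zipok -[w]cats0 zip_cat // all_cat.
by rewrite cats0; case: u2 => [|? ?]; rewrite /= ?andbT.
Qed.

Lemma nk_Z_split e k : nk_Z (e + k) e = nk_Qc ^+ e * nk_Pc ^+ k.
Proof.
rewrite -nk_Z_diag /nk_Z /nk_PW nk_sum_cat mulr_suml.
apply: eq_big_seq => u1 Hu1; rewrite exchange_big mulr_suml.
apply: eq_big_seq => w Hw.
rewrite -(nk_sum_wt _ _ nk_wP) mulr_sumr; apply: eq_bigr => u2 _.
rewrite nk_zipok_cat; last by rewrite (nk_words_size Hu1) (nk_words_size Hw).
rewrite nk_wt_cat; case: (nk_zipok u1 w); rewrite ?mul0r //; ring.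
Qed.

Lemma nk_S_step d e : (0 < d)%N -> nk_S d (d + (d + e)) = nk_Qc ^+ d * nk_S d e.
Proof.
move=> d0; rewrite -nk_Z_diag /nk_S /nk_Z /nk_PW nk_sum_cat mulr_suml.
apply: eq_big_seq => u1 Hu1; rewrite nk_sum_cat mulr_suml.
apply: eq_big_seq => u2 Hu2; rewrite mulr_sumr; apply: eq_big_seq => u3 Hu3.
have s1 := nk_words_size Hu1; have s2 := nk_words_size Hu2; have s3 := nk_words_size Hu3.
have -> : (d + (d + e) = (d.-1 + (d + e)).+1)%N by lia.
rewrite [nk_blk _ _.+1 _]/= take_size_cat // drop_size_cat // take_size_cat //.
rewrite -drop_drop drop_size_cat // drop_size_cat //.
rewrite (@nk_blk_fuel _ _ e) //; last by rewrite s3; lia.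
  rewrite !nk_wt_cat nk_if_mul; case: (nk_zipok _ _); case: (nk_blk _ _ _); rewrite ?mul0r ?mulr0 //; ring.
by rewrite s3; lia.
Qed.

Lemma nk_S_small1 d N : (N <= d)%N -> nk_S d N = nk_Pc ^+ N.
Proof.
move=> hN; rewrite /nk_S -(nk_sum_wt _ _ nk_wP); apply: eq_big_seq => B HB.
have sB := nk_words_size HB.
case: N hN sB HB => [|N] hN sB HB //=.
rewrite take_oversize ?sB // drop_oversize ?sB // drop_oversize ?sB; last by lia.
by rewrite nk_blk_nil /nk_zipok; case: (B).
Qed.

Lemma nk_S_small2 d e : (e < d)%N -> nk_S d (d + e) = nk_Z d e.
Proof.
move=> he; rewrite /nk_S /nk_Z /nk_PW nk_sum_cat.
apply: eq_big_seq => u1 Hu1; apply: eq_big_seq => u2 Hu2.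
have s1 := nk_words_size Hu1; have s2 := nk_words_size Hu2.
have -> : (d + e = (d.-1 + e).+1)%N by lia.
rewrite [nk_blk _ _.+1 _]/= take_size_cat // drop_size_cat // take_oversize; last by rewrite s2 ltnW.
rewrite -drop_drop drop_size_cat // drop_oversize; last by rewrite s2 ltnW.
by rewrite nk_blk_nil andbT nk_wt_cat.
Qed.

Hypothesis r0 : 0 <= r.

Lemma nk_wr_ge0 c : 0 <= nk_wr c.
Proof. exact: exprn_ge0. Qed.
Lemma nk_wP_ge0 c : 0 <= nk_wP c.
Proof. by rewrite /nk_wP; case: ifP => // _; apply: nk_wr_ge0. Qed.
Lemma nk_wP2_ge0 c : 0 <= nk_wP2 c.
Proof. by rewrite /nk_wP2; case: ifP => // _; apply: nk_wr_ge0. Qed.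
Lemma nk_wt_ge0 (f : nat * nat -> R) s : (forall c, 0 <= f c) -> 0 <= nk_wt f s.
Proof. by move=> h; apply: prodr_ge0 => c _. Qed.
Lemma nk_S_ge0 d N : 0 <= nk_S d N.
Proof.
apply: sumr_ge0 => B _; case: ifP => // _; apply: nk_wt_ge0; exact: nk_wP_ge0.
Qed.
Lemma nk_Pc_ge0 : 0 <= nk_Pc.
Proof. by apply: sumr_ge0 => c _; apply: nk_wP_ge0. Qed.
Lemma nk_P2c_ge0 : 0 <= nk_P2c.
Proof. by apply: sumr_ge0 => c _; apply: nk_wP2_ge0. Qed.
Lemma nk_Qc_ge0 : 0 <= nk_Qc.
Proof.
apply: sumr_ge0 => c _; apply: sumr_ge0 => c' _; case: ifP => // _.
by apply: mulr_ge0; apply: nk_wP_ge0.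
Qed.

Variables th la mu : R.
Hypothesis th0 : 0 <= th.
Hypothesis la1 : 1 <= la.
Hypothesis hQ : nk_Qc <= th ^+ 2.
Hypothesis hP : nk_Pc <= la * th.

Lemma nk_S_bound d N : (0 < d)%N -> nk_S d N <= th ^+ N * la ^+ d.
Proof.
move=> d0; elim/ltn_ind: N => N IH.
have la0 : 0 <= la by apply: le_trans la1.
have Q0 := nk_Qc_ge0; have P0 := nk_Pc_ge0.
case: (leqP (d + d) N) => hN.
  have -> : N = (d + (d + (N - (d + d))))%N by lia.
  rewrite nk_S_step //.
  have h1 : nk_S d (N - (d + d)) <= th ^+ (N - (d + d)) * la ^+ d by apply: IH; lia.
  have h2 : nk_Qc ^+ d <= th ^+ (d + d).
    have -> : th ^+ (d + d) = (th ^+ 2) ^+ d by rewrite -exprM; congr (_ ^+ _); lia.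
    by apply: lerXn2r; rewrite ?nnegrE ?exprn_ge0.
  apply: le_trans (ler_pM (exprn_ge0 _ Q0) (nk_S_ge0 _ _) h2 h1) _.
  by rewrite mulrA -exprD addnA.
case: (leqP N d) => hNd.
  rewrite nk_S_small1 //.
  have h1 : nk_Pc ^+ N <= (la * th) ^+ N by apply: lerXn2r; rewrite ?nnegrE ?mulr_ge0.
  apply: le_trans h1 _; rewrite exprMn mulrC; apply: ler_wpM2l; first exact: exprn_ge0.
  exact: ler_weXn2l.
have -> : N = (d + (N - d))%N by lia.
rewrite nk_S_small2; last by lia.
have E : d = ((N - d) + (d - (N - d)))%N by lia.
rewrite {1}E nk_Z_split.
set e := (N - d)%N; set k := (d - e)%N.
have hd : d = (e + k)%N by rewrite /k /e; lia.
have h1 : nk_Qc ^+ e <= th ^+ (e + e).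
  have -> : th ^+ (e + e) = (th ^+ 2) ^+ e by rewrite -exprM; congr (_ ^+ _); lia.
  by apply: lerXn2r; rewrite ?nnegrE ?exprn_ge0.
have h2 : nk_Pc ^+ k <= (la * th) ^+ k by apply: lerXn2r; rewrite ?nnegrE ?mulr_ge0.
apply: le_trans (ler_pM (exprn_ge0 _ Q0) (exprn_ge0 _ P0) h1 h2) _.
have -> : th ^+ (e + e) * (la * th) ^+ k = th ^+ (d + e) * la ^+ k.
  by rewrite exprMn mulrCA -exprD mulrC hd; congr (_ * _); congr (_ ^+ _); lia.
apply: ler_wpM2l; first exact: exprn_ge0.
by apply: ler_weXn2l; rewrite // hd leq_addl.
Qed.

Definition nk_Good d (p : seq (nat * nat)) :=
  all nk_good2 (take d.-1 p) &&
  (all nk_good (drop d.-1 p) && nk_blk d (size (drop d.-1 p)) (drop d.-1 p)).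
Definition nk_G d h := \sum_(p <- nk_PW h) (if nk_Good d p then nk_wt nk_wr p else 0).

Lemma nk_G_eq1 d h : (d.-1 <= h)%N -> nk_G d h = nk_P2c ^+ d.-1 * nk_S d (h - d.-1).
Proof.
move=> hd; rewrite /nk_G.
have -> : h = (d.-1 + (h - d.-1))%N by lia.
rewrite /nk_PW nk_sum_cat addKn -(nk_sum_wt _ _ nk_wP2) mulr_suml.
apply: eq_big_seq => u Hu; rewrite /nk_S mulr_sumr; apply: eq_big_seq => v Hv.
have su := nk_words_size Hu; have sv := nk_words_size Hv.
rewrite /nk_Good take_size_cat // drop_size_cat // sv nk_wt_cat. rewrite (@nk_if_mul _ (all nk_good2 u)).
rewrite /nk_wP2 nk_wt_if; congr (_ * _).
by rewrite /nk_wP nk_wt_if; case: (nk_blk _ _ _); case: (all _ _).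
Qed.

Lemma nk_G_eq2 d h : (h < d.-1)%N -> nk_G d h = nk_P2c ^+ h.
Proof.
move=> hd; rewrite /nk_G -(nk_sum_wt _ _ nk_wP2); apply: eq_big_seq => p Hp.
have sp := nk_words_size Hp.
rewrite /nk_Good take_oversize ?sp; last by lia.
rewrite drop_oversize ?sp; last by lia.
by rewrite /= ?nk_blk_nil ?andbT /nk_wP2 nk_wt_if.
Qed.

Hypothesis hP2 : nk_P2c * la <= mu.
Hypothesis hthmu : th <= mu.

Lemma nk_G_bound d h : (0 < d)%N -> nk_G d h <= la * mu ^+ h.
Proof.
move=> d0; have la0 : 0 <= la by apply: le_trans la1.
have P20 := nk_P2c_ge0.
have mu0 : 0 <= mu by apply: le_trans hthmu.
case: (leqP d.-1 h) => hd.
  rewrite nk_G_eq1 //.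
  have h1 := nk_S_bound (h - d.-1) d0.
  apply: le_trans (ler_wpM2l (exprn_ge0 _ P20) h1) _.
  have -> : la ^+ d = la * la ^+ d.-1 by rewrite -exprS; congr (_ ^+ _); lia.
  have -> : nk_P2c ^+ d.-1 * (th ^+ (h - d.-1) * (la * la ^+ d.-1)) =
            la * ((nk_P2c * la) ^+ d.-1 * th ^+ (h - d.-1)) by rewrite exprMn; ring.
  apply: ler_wpM2l => //.
  have -> : mu ^+ h = mu ^+ d.-1 * mu ^+ (h - d.-1) by rewrite -exprD; congr (_ ^+ _); lia.
  apply: ler_pM; rewrite ?exprn_ge0 ?mulr_ge0 //.
    by apply: lerXn2r; rewrite ?nnegrE ?mulr_ge0.
  by apply: lerXn2r; rewrite ?nnegrE.
rewrite nk_G_eq2 //.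
have h1 : nk_P2c <= mu.
  apply: le_trans hP2; rewrite -{1}(mulr1 nk_P2c); exact: ler_wpM2l.
apply: le_trans (_ : mu ^+ h <= _).
  by apply: lerXn2r; rewrite ?nnegrE.
rewrite -{1}(mul1r (mu ^+ h)); apply: ler_wpM2r => //; exact: exprn_ge0.
Qed.
End Bounds.

Definition nk_W n := nk_words (iota 1 4) n.
Definition nk_pairs L (pre : seq nat) := zip (take L./2 pre) (rev (drop (L - L./2) pre)).

Section Seqs.
Variable R : realFieldType.
Local Open Scope ring_scope.
Variable r : R.

Definition nk_Fc := \sum_(a <- iota 1 4) r ^+ a.

Lemma nk_expr_sumn (s : seq nat) : r ^+ sumn s = nk_wt (fun a => r ^+ a) s.
Proof.
elim: s => [|a s IH]; first by rewrite /nk_wt big_nil.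
by rewrite /nk_wt big_cons /= exprD -/(nk_wt _ s) IH.
Qed.

Lemma nk_sum_W_expr n : \sum_(s <- nk_W n) r ^+ sumn s = nk_Fc ^+ n.
Proof.
rewrite -(nk_sum_wt _ _ (fun a => r ^+ a)); apply: eq_bigr => s _.
exact: nk_expr_sumn.
Qed.

Lemma nk_sum_rev n (H : seq nat -> R) :
  \sum_(v <- nk_W n) H (rev v) = \sum_(v <- nk_W n) H v.
Proof.
rewrite -(big_map rev xpredT H); apply: perm_big.
apply: uniq_perm.
- by rewrite (map_inj_uniq (can_inj revK)) nk_words_uniq // iota_uniq.
- by rewrite nk_words_uniq // iota_uniq.
move=> v; apply/mapP/idP.
  by case=> w; rewrite !nk_words_mem => /andP[sw aw] ->; rewrite size_rev sw all_rev.
move=> hv; exists (rev v); last by rewrite revK.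
by move: hv; rewrite !nk_words_mem size_rev all_rev.
Qed.

Lemma nk_sum_zip h (H : seq (nat * nat) -> R) :
  \sum_(u <- nk_W h) \sum_(v <- nk_W h) H (zip u v) = \sum_(p <- nk_PW h) H p.
Proof.
elim: h H => [|h IH] H.
  by rewrite /nk_W /nk_PW /= !big_seq1.
rewrite /nk_W /nk_PW !nk_words_S big_allpairs_dep /nk_AP big_allpairs_dep big_allpairs.
apply: eq_bigr => a _.
under eq_bigr do rewrite big_allpairs_dep.
rewrite exchange_big; apply: eq_bigr => b _ /=.
exact: (IH (fun p => H ((a, b) :: p))).
Qed.

Lemma nk_expr_zip u v : size u = size v ->
  r ^+ (sumn u + sumn v) = nk_wt (nk_wr r) (zip u v).
Proof.
elim: u v => [|a u IH] [|b v] //= h.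
  by rewrite /nk_wt big_nil.
rewrite /nk_wt big_cons -/(nk_wt _ _) -IH; last by case: h.
by rewrite /nk_wr /= -exprD; congr (_ ^+ _); lia.
Qed.

Lemma nk_pre_sum d L :
  \sum_(pre <- nk_W L) (if nk_Good d (nk_pairs L pre) then r ^+ sumn pre else 0)
  = nk_Fc ^+ (L - L./2 - L./2) * nk_G r d L./2.
Proof.
rewrite /nk_pairs; set h := L./2; set m := (L - h - h)%N.
have E : L = (h + (m + h))%N by rewrite /m /h; lia.
have E2 : (L - h = h + m)%N by rewrite /m /h; lia.
rewrite {1}E /nk_W nk_sum_cat.
transitivity (\sum_(u <- nk_words (iota 1 4) h) \sum_(mm <- nk_words (iota 1 4) m)
   r ^+ sumn mm * \sum_(v <- nk_words (iota 1 4) h)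
     (if nk_Good d (zip u v) then r ^+ (sumn u + sumn v) else 0)).
  apply: eq_big_seq => u Hu; rewrite nk_sum_cat; apply: eq_big_seq => mm Hmm.
  have su := nk_words_size Hu; have sm := nk_words_size Hmm.
  rewrite -(nk_sum_rev h (fun v => if nk_Good d (zip u v) then r ^+ (sumn u + sumn v) else 0)).
  rewrite mulr_sumr; apply: eq_big_seq => v Hv.
  rewrite take_size_cat // E2 catA drop_size_cat; last by rewrite size_cat su sm.
  rewrite sumn_rev !sumn_cat; case: ifP => _; rewrite ?mulr0 //.
  by rewrite !exprD; ring.
rewrite -nk_sum_W_expr /nk_W mulr_suml exchange_big; apply: eq_bigr => mm _.
rewrite -mulr_sumr; congr (_ * _).
rewrite /nk_G -nk_sum_zip; apply: eq_big_seq => u Hu; apply: eq_big_seq => v Hv.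
rewrite nk_expr_zip //.
by rewrite (nk_words_size Hu) (nk_words_size Hv).
Qed.

End Seqs.


Lemma nk_nsg_sub x s t : nsg x -> (0 < s)%N -> (0 < t)%N -> (s + t <= size x)%N ->
  (xj x (s + t) <= xj x s + xj x t)%N.
Proof.
move=> /allP H s0 t0 st.
have /allP H1 := H s (ltac:(rewrite mem_iota; lia)).
have /implyP H2 := H1 t (ltac:(rewrite mem_iota; lia)).
by case/andP: (H2 (ltac:(lia))).
Qed.

Lemma nk_pairs_size L pre : size pre = L -> size (nk_pairs L pre) = L./2.
Proof.
move=> sp; rewrite /nk_pairs size_zip size_take_min size_rev size_drop sp; lia.
Qed.

Lemma nk_pairs_nth L pre s : size pre = L -> (s < L./2)%N ->
  nth (0,0) (nk_pairs L pre) s = (nth 0 pre s, nth 0 pre (L - s.+1)).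
Proof.
move=> sp hs; rewrite /nk_pairs nth_zip; last first.
  rewrite size_take_min size_rev size_drop sp; lia.
rewrite nth_take // nth_rev; last by rewrite size_drop sp; lia.
rewrite nth_drop size_drop sp; congr (_, nth _ _ _); lia.
Qed.

Lemma nk_good_exists x n l :
  size x = n -> all (mem (iota 1 4)) x -> nsg x -> (1 <= l <= n)%N -> xj x l = 4%N ->
  nk_Good (find (fun c => c.1 == 1%N) (nk_pairs l.-1 (take l.-1 x))).+1
          (nk_pairs l.-1 (take l.-1 x)).
Proof.
move=> sx ax nx /andP[l1 ln] xl.
set L := l.-1; set p := nk_pairs L (take L x).
have sp : size (take L x) = L by rewrite size_take_min; lia.
have hp : size p = L./2 by apply: nk_pairs_size.
have sub s t : (0 < s)%N -> (0 < t)%N -> (s + t <= n)%N ->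
    (nth 0 x (s + t).-1 <= nth 0 x s.-1 + nth 0 x t.-1)%N.
  by move=> *; apply: nk_nsg_sub => //; rewrite sx.
have pos i : (i < n)%N -> (0 < nth 0 x i)%N.
  move=> hi; have /(all_nthP 0) := ax; move/(_ i); rewrite sx => /(_ hi) h.
  have : nth 0 x i \in iota 1 4 by []. 
  by rewrite mem_iota; lia.
have hq j : (j < L./2)%N -> nth (0,0) p j = (nth 0 x j, nth 0 x (L - j.+1)).
  move=> hj; rewrite /p nk_pairs_nth // !nth_take //; lia.
have pair j : (j < L./2)%N -> (4 <= nth 0 x j + nth 0 x (L - j.+1))%N.
  move=> hj; have := sub j.+1 (L - j) ltac:(lia) ltac:(lia) ltac:(lia).
  have -> : (j.+1 + (L - j)).-1 = L by lia.
  have -> : nth 0 x L = 4%N by rewrite -xl /xj; congr nth; lia.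
  by have -> : (L - j).-1 = (L - j.+1)%N by lia.
set i0 := find _ p.
have i0h : (i0 <= L./2)%N by rewrite -hp find_size.
rewrite /nk_Good /=; apply/and3P; split.
- apply/(all_nthP (0,0)) => j; rewrite size_take_min => hj.
  rewrite nth_take; last by lia.
  have hj' : (j < L./2)%N by lia.
  have := before_find (0,0) (ltac:(lia) : (j < i0)%N); rewrite hq // /= => ne1.
  rewrite /nk_good2 /nk_good /= pair //=.
  have := pos j ltac:(lia); move/negbT: ne1; lia.
- apply/(all_nthP (0,0)) => j; rewrite size_drop hp => hj.
  by rewrite nth_drop hq /nk_good /=; [apply: pair|]; lia.
case: (ltnP i0 L./2) => hi; last first.
  have -> : drop i0 p = [::] by apply/nilP; rewrite /nilp size_drop hp; lia.
  exact: nk_blk_nil.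
have x1 : nth 0 x i0 = 1%N.
  have := nth_find (0,0) (ltac:(rewrite has_find hp; exact hi) : has (fun c => c.1 == 1%N) p).
  by rewrite -/i0 hq // /= => /eqP.
apply: nk_blk_lag => // j; rewrite size_drop hp => hj.
rewrite !nth_drop !hq; [|lia|lia].
rewrite /nk_K /=; apply/andP; split.
  have := sub (i0 + j).+1 i0.+1 ltac:(lia) ltac:(lia) ltac:(lia).
  have -> : ((i0 + j).+1 + i0.+1).-1 = (i0 + (j + i0.+1))%N by lia.
  by rewrite /= x1 addn1.
have := sub (L - (i0 + (j + i0.+1))) i0.+1 ltac:(lia) ltac:(lia) ltac:(lia).
have -> : (L - (i0 + (j + i0.+1)) + i0.+1).-1 = (L - (i0 + j).+1)%N by lia.
have -> : (L - (i0 + (j + i0.+1))).-1 = (L - (i0 + (j + i0.+1)).+1)%N by lia.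
by rewrite /= x1 addn1.
Qed.


Lemma nk_nth_mid (T : eqType) (x0 : T) (pre : seq T) a v L :
  size pre = L -> nth x0 (pre ++ a :: v) L = a.
Proof. by move=> <-; rewrite nth_cat ltnn subnn. Qed.

Section XSum.
Variable R : realFieldType.
Local Open Scope ring_scope.
Variable r : R.

Lemma nk_x_sum d L e :
  \sum_(x <- nk_W (L + (1 + e)))
    (if (nth 0%N x L == 4%N) && nk_Good d (nk_pairs L (take L x)) then r ^+ sumn x else 0)
  = (\sum_(pre <- nk_W L) (if nk_Good d (nk_pairs L pre) then r ^+ sumn pre else 0))
    * r ^+ 4 * nk_Fc r ^+ e.
Proof.
rewrite /nk_W nk_sum_cat mulr_suml mulr_suml; apply: eq_big_seq => pre Hp.
have sp := nk_words_size Hp.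
rewrite nk_sum_cat.
have -> : nk_words (iota 1 4) 1 = [:: [:: 1%N]; [:: 2%N]; [:: 3%N]; [:: 4%N]] by [].
rewrite -(nk_sum_W_expr r e) /nk_W !big_cons big_nil addr0.
rewrite !mulr_sumr -!big_split /=; apply: eq_bigr => t _.
rewrite !nk_nth_mid // !take_size_cat // !sumn_cat /=.
case: (nk_Good _ _); rewrite ?mul0r ?add0r ?addr0 //.
by rewrite !exprD; ring.
Qed.

End XSum.


Section Consts.
Variable R : realFieldType.
Local Open Scope ring_scope.
Definition nk_r : R := 31%:R / 50%:R.

Lemma nk_Pc_val : nk_Pc nk_r <= (116%:R / 100%:R) * (93%:R / 100%:R).
Proof.
rewrite /nk_Pc /nk_AP /= !big_cons big_nil /nk_wP /nk_good /nk_wr /= /nk_r.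
lra.
Qed.

Lemma nk_P2c_val : nk_P2c nk_r * (116%:R / 100%:R) <= 97%:R / 100%:R.
Proof.
rewrite /nk_P2c /nk_AP /= !big_cons big_nil /nk_wP2 /nk_good2 /nk_good /nk_wr /= /nk_r.
lra.
Qed.

Lemma nk_Qc_val : nk_Qc nk_r <= (93%:R / 100%:R) ^+ 2.
Proof.
rewrite /nk_Qc /nk_AP /= !big_cons !big_nil /nk_K /nk_wP /nk_good /nk_wr /= /nk_r.
rewrite ?mul0r ?mulr0 ?addr0 ?add0r.
lra.
Qed.

End Consts.


Section Consts2.
Variable R : realFieldType.
Local Open Scope ring_scope.
Notation nk_r := (@nk_r R).
Definition nk_th : R := 93%:R / 100%:R.
Definition nk_la : R := 116%:R / 100%:R.
Definition nk_mu : R := 97%:R / 100%:R.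

Lemma nk_r_ge0 : 0 <= nk_r. Proof. rewrite /nk_r; lra. Qed.
Lemma nk_Fc_val : nk_Fc nk_r = nk_r + nk_r ^+ 2 + nk_r ^+ 3 + nk_r ^+ 4.
Proof. by rewrite /nk_Fc /= !big_cons big_nil expr1 addr0 !addrA. Qed.
Lemma nk_Fc_ge1 : 1 <= nk_Fc nk_r.
Proof. rewrite nk_Fc_val /nk_r; lra. Qed.
Lemma nk_mu50 : nk_mu ^+ 50 * nk_Fc nk_r <= 1.
Proof.
have m0 : 0 <= nk_mu by rewrite /nk_mu; lra.
have h1 : nk_mu ^+ 10 <= 3%:R / 4%:R by rewrite /nk_mu !exprS expr0; lra.
have h : nk_mu ^+ 50 <= (3%:R / 4%:R) ^+ 5.
  rewrite (_ : 50%N = (10 * 5)%N) // exprM.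
  by apply: lerXn2r; rewrite ?nnegrE ?exprn_ge0 //; lra.
have h3 : 0 <= nk_mu ^+ 50 by apply: exprn_ge0.
rewrite nk_Fc_val /nk_r.
move: h h3; set M := nk_mu ^+ 50; rewrite !exprS expr0 => h h3.
nra.
Qed.

Lemma nk_mu_exp h e : (50 * e <= h + 1)%N -> nk_mu ^+ h * nk_Fc nk_r ^+ e <= nk_Fc nk_r.
Proof.
have F1 := nk_Fc_ge1; have F0 : 0 <= nk_Fc nk_r by apply: le_trans F1.
have m0 : 0 <= nk_mu by rewrite /nk_mu; lra.
have m1 : nk_mu <= 1 by rewrite /nk_mu; lra.
case: e => [|e] he.
  rewrite expr0 mulr1; apply: le_trans F1; exact: exprn_ile1.
have h1 : nk_mu ^+ h <= nk_mu ^+ (50 * e) by apply: ler_wiXn2l => //; lia.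
apply: le_trans (ler_wpM2r (exprn_ge0 _ F0) h1) _.
rewrite exprS mulrCA exprM -exprMn.
rewrite -[X in _ <= X]mulr1; apply: ler_wpM2l => //.
apply: exprn_ile1; first by apply: mulr_ge0; rewrite ?exprn_ge0.
exact: nk_mu50.
Qed.

Definition nk_C0 : R := nk_Fc nk_r ^+ 2 * nk_la * nk_r ^+ 4.

Lemma nk_G_ge0 d h : 0 <= nk_G nk_r d h.
Proof.
apply: sumr_ge0 => p _; case: ifP => // _; apply: nk_wt_ge0 => c.
apply: nk_wr_ge0; exact: nk_r_ge0.
Qed.

Lemma nk_term_bound n l d : (1 <= l <= n)%N -> (0 < d)%N -> (101 * (n - l) <= n)%N ->
  \sum_(x <- nk_W n)
    (if (nth 0%N x l.-1 == 4%N) && nk_Good d (nk_pairs l.-1 (take l.-1 x))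
     then nk_r ^+ sumn x else 0) <= nk_C0.
Proof.
move=> /andP[l1 ln] d0 hd.
rewrite {1}(_ : n = l.-1 + (1 + (n - l)))%N; last by lia.
rewrite nk_x_sum nk_pre_sum.
set L := l.-1; set h := L./2; set e := (n - l)%N.
have F1 := nk_Fc_ge1; have F0 : 0 <= nk_Fc nk_r by apply: le_trans F1.
have r0 := nk_r_ge0.
have hG : nk_G nk_r d h <= nk_la * nk_mu ^+ h.
  apply: (@nk_G_bound R nk_r nk_r_ge0 nk_th nk_la nk_mu) => //;
    rewrite /nk_th /nk_la /nk_mu;
    first [exact: nk_Qc_val | exact: nk_Pc_val | exact: nk_P2c_val | lra].
have hF : nk_Fc nk_r ^+ (L - h - h) <= nk_Fc nk_r.
  rewrite -{2}(expr1 (nk_Fc nk_r)); apply: ler_weXn2l => //; rewrite /h; lia.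
have hm : nk_mu ^+ h * nk_Fc nk_r ^+ e <= nk_Fc nk_r by apply: nk_mu_exp; rewrite /e /h /L; lia.
have la0 : 0 <= nk_la by rewrite /nk_la; lra.
have m0 : 0 <= nk_mu by rewrite /nk_mu; lra.
have step1 : nk_Fc nk_r ^+ (L - h - h) * nk_G nk_r d h <= nk_Fc nk_r * (nk_la * nk_mu ^+ h).
  by apply: ler_pM; rewrite ?exprn_ge0 ?nk_G_ge0.
apply: le_trans (ler_wpM2r (exprn_ge0 _ F0) (ler_wpM2r (exprn_ge0 _ r0) step1)) _.
rewrite /nk_C0.
have -> : nk_Fc nk_r * (nk_la * nk_mu ^+ h) * nk_r ^+ 4 * nk_Fc nk_r ^+ e =
          (nk_Fc nk_r * nk_la * nk_r ^+ 4) * (nk_mu ^+ h * nk_Fc nk_r ^+ e) by ring.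
have -> : nk_Fc nk_r ^+ 2 * nk_la * nk_r ^+ 4 = (nk_Fc nk_r * nk_la * nk_r ^+ 4) * nk_Fc nk_r.
  by rewrite expr2; ring.
apply: ler_wpM2l => //; by rewrite !mulr_ge0 ?exprn_ge0.
Qed.
End Consts2.


Lemma nk_seqs_len n g : seqs_len n g = nk_words (iota 0 g.+1) n.
Proof. by elim: n => //= n ->. Qed.

Lemma nk_sumn_map (T : Type) (f : T -> nat) s : sumn (map f s) = (\sum_(i <- s) f i)%N.
Proof. by elim: s => [|a s IH]; rewrite ?big_nil ?big_cons //= IH. Qed.

Lemma nk_stepA (R : realType) (delta : R) g :
  (count_genus (fam delta) g <=
   \sum_(n <- iota 0 g.+1) count (fun x => fam delta x && (sumn x == g)) (nk_W n))%N.
Proof.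
rewrite /count_genus /candidates count_flatten -map_comp nk_sumn_map.
apply: leq_sum => n _ /=.
rewrite nk_seqs_len -!size_filter; apply: uniq_leq_size.
  by apply: filter_uniq; apply: nk_words_uniq; apply: iota_uniq.
move=> x; rewrite !mem_filter => /andP[/and3P[hc hg hf] hx].
rewrite hf /=; rewrite /genus in hg; rewrite hg /=.
rewrite /nk_W nk_words_mem (nk_words_size hx) eqxx /=.
case/and3P: hf => _ /eqP hmax _.
apply/allP => y hy.
have y0 : (0 < y)%N by move/allP: hc => /(_ y hy).
have y4 : (y <= 4)%N.
  by rewrite -hmax; apply: (@leq_bigmax_seq _ x xpredT id y).
have : y \in iota 1 4 by rewrite mem_iota; lia.
by [].
Qed.

Section Count.
Variable R : realType.
Local Open Scope ring_scope.

Local Notation nk_r := (@nk_r R).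
Local Notation nk_C0 := (@nk_C0 R).
Local Notation nk_la := (@nk_la R).
Definition nk_delta : R := 1 / 101%:R.

Lemma nk_count_sum (T : eqType) (a : pred T) s (c : R) :
  (count a s)%:R * c = \sum_(x <- s) (if a x then c else 0).
Proof.
elim: s => [|y s IH]; first by rewrite big_nil mul0r.
by rewrite big_cons /= natrD mulrDl IH; case: (a y); rewrite ?mul1r ?mul0r.
Qed.

Lemma nk_le_sum_mem (T : eqType) s i (F : T -> R) :
  i \in s -> (forall j, 0 <= F j) -> F i <= \sum_(j <- s) F j.
Proof.
elim: s => [|y s IH] //; rewrite inE big_cons => /orP[/eqP ->|hi] hF.
  by rewrite lerDl sumr_ge0.
by apply: le_trans (IH hi hF) _; rewrite lerDr.
Qed.

Lemma nk_sum_const (T : Type) (s : seq T) (c : R) :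
  \sum_(i <- s) c = (size s)%:R * c.
Proof.
elim: s => [|y s IH]; first by rewrite big_nil mul0r.
by rewrite big_cons IH /= -add1n natrD mulrDl mul1r.
Qed.

Definition nk_E n l d (x : seq nat) :=
  (101 * (n - l) <= n)%N &&
  ((nth 0%N x l.-1 == 4%N) && nk_Good d (nk_pairs l.-1 (take l.-1 x))).

Lemma nk_pointwise n g x : x \in nk_W n -> fam nk_delta x -> sumn x = g ->
  nk_r ^+ sumn x <= \sum_(l <- iota 1 n) \sum_(d <- iota 1 n)
     (if nk_E n l d x then nk_r ^+ sumn x else 0 : R).
Proof.
move=> hx hf hg.
have sx := nk_words_size hx.
have ax : all (mem (iota 1 4)) x by move: hx; rewrite /nk_W nk_words_mem => /andP[].
case/and3P: hf => hn _ /hasP[l]; rewrite mem_iota => _ /and5P[l1 ln xl _ hdl].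
have ln2 : (l <= n)%N by rewrite -sx.
have r0 : 0 <= (nk_r : R) by exact: nk_r_ge0.
have F0 d l' : 0 <= (if nk_E n l' d x then nk_r ^+ sumn x else 0 : R).
  by case: ifP => // _; apply: exprn_ge0.
set d := (find (fun c => c.1 == 1%N) (nk_pairs l.-1 (take l.-1 x))).+1.
have hd : (101 * (n - l) <= n)%N.
  have : ((101 * (n - l))%:R : R) <= n%:R.
    by rewrite natrM; move: hdl; rewrite sx /nk_delta; lra.
  by rewrite ler_nat.
have hE : nk_E n l d x.
  rewrite /nk_E hd /=; apply/andP; split.
    by move/eqP: xl; rewrite /xj => ->.
  apply: (@nk_good_exists x n l) => //; [by rewrite -sx ln l1 | exact/eqP].
have dn : d \in iota 1 n.
  rewrite mem_iota /d.
  have := find_size (fun c => c.1 == 1%N) (nk_pairs l.-1 (take l.-1 x)).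
  rewrite nk_pairs_size; last by rewrite size_take_min; lia.
  lia.
have ln' : l \in iota 1 n by rewrite mem_iota; lia.
apply: le_trans (nk_le_sum_mem ln' _) => [|l'].
  by apply: le_trans (nk_le_sum_mem dn (fun d' => F0 d' l)) => //; rewrite hE.
by apply: sumr_ge0 => d' _; apply: F0.
Qed.


Lemma nk_C0_ge0 : 0 <= (nk_C0 : R).
Proof.
rewrite /nk_C0; apply: mulr_ge0; first apply: mulr_ge0.
- apply: exprn_ge0; apply: le_trans (nk_Fc_ge1 _); exact: ler01.
- by rewrite /nk_la; lra.
- apply: exprn_ge0; exact: nk_r_ge0.
Qed.

Lemma nk_inner n l d : l \in iota 1 n -> d \in iota 1 n ->
  \sum_(x <- nk_W n) (if nk_E n l d x then nk_r ^+ sumn x else 0 : R) <= nk_C0.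
Proof.
rewrite !mem_iota => hl hd; rewrite /nk_E.
case hc: (101 * (n - l) <= n)%N; last first.
  by rewrite big1 ?nk_C0_ge0.
apply: nk_term_bound => //; lia.
Qed.

Lemma nk_total g :
  (count_genus (fam nk_delta) g)%:R * nk_r ^+ g <= ((g.+1) ^ 3)%:R * (nk_C0 : R).
Proof.
have r0 : 0 <= (nk_r : R) by exact: nk_r_ge0.
have C00 := nk_C0_ge0.
apply: le_trans (_ : (\sum_(n <- iota 0 g.+1)
    count (fun x => fam nk_delta x && (sumn x == g)) (nk_W n))%:R * nk_r ^+ g <= _).
  by apply: ler_wpM2r; rewrite ?exprn_ge0 // ler_nat nk_stepA.
rewrite natr_sum mulr_suml.
apply: le_trans (_ : \sum_(n <- iota 0 g.+1) ((g.+1) ^ 2)%:R * (nk_C0 : R) <= _); last first.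
  by rewrite nk_sum_const size_iota mulrA -natrM (expnS _ 2).
rewrite big_seq [X in _ <= X]big_seq; apply: ler_sum => n; rewrite mem_iota => hn.
rewrite nk_count_sum.
apply: le_trans (_ : \sum_(x <- nk_W n) \sum_(l <- iota 1 n) \sum_(d <- iota 1 n)
   (if nk_E n l d x then nk_r ^+ sumn x else 0 : R) <= _).
  rewrite big_seq [X in _ <= X]big_seq; apply: ler_sum => x hx.
  case: ifP => [/andP[hf /eqP hg]|_].
    by rewrite -{1}hg; apply: nk_pointwise hx hf hg.
  apply: sumr_ge0 => l _; apply: sumr_ge0 => d _; case: ifP => // _; exact: exprn_ge0.
rewrite exchange_big.
under eq_bigr do rewrite exchange_big.
apply: le_trans (_ : \sum_(l <- iota 1 n) \sum_(d <- iota 1 n) (nk_C0 : R) <= _).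
  rewrite big_seq [X in _ <= X]big_seq; apply: ler_sum => l hl.
  rewrite big_seq [X in _ <= X]big_seq; apply: ler_sum => d hd.
  exact: nk_inner.
rewrite nk_sum_const nk_sum_const size_iota mulrA -natrM.
apply: ler_wpM2r => //; rewrite ler_nat expnS expn1 /=.
by apply: leq_mul; lia.
Qed.

End Count.


Section Final.
Variable R : realType.
Local Open Scope ring_scope.

Lemma nk_bern (x : R) k : 0 <= x -> 1 + k%:R * x <= (1 + x) ^+ k.
Proof.
move=> x0; elim: k => [|k IH]; first by rewrite mul0r addr0 expr0.
rewrite exprS.
have h1 : 0 <= 1 + x by lra.
apply: le_trans (_ : (1 + x) * (1 + k%:R * x) <= _); last by apply: ler_wpM2l.
have k0 : 0 <= (k%:R : R) by apply: ler0n.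
rewrite -natr1; nra.
Qed.

Definition nk_eps : R := 1 / 1000%:R.

Lemma nk_poly (C : R) : 0 <= C -> exists g0 : nat, forall g : nat, (g0 <= g)%N ->
  ((g.+1) ^ 3)%:R * C <= (1 + nk_eps) ^+ g.
Proof.
move=> C0.
set M : R := 512%:R * C * 1000%:R ^+ 4.
have M0 : 0 <= M.
  rewrite /M; apply: mulr_ge0; [apply: mulr_ge0; [apply: ler0n | exact: C0] | apply: exprn_ge0; apply: ler0n].
set N := Num.Def.archi_bound M.
have hN := archi_boundP M0.
exists (4 * N.+1)%N => g hg.
set k := (g %/ 4)%N.
have hk1 : (N.+1 <= k)%N by rewrite /k; lia.
have hgk : (g.+1 <= 8 * k)%N by rewrite /k; lia.
have h4k : (4 * k <= g)%N by rewrite /k; lia.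
set K : R := k%:R.
have hKN : M < K.
  apply: lt_le_trans hN _; rewrite /K ler_nat; lia.
have K0 : 0 <= K by apply: ler0n.
have e0 : 0 <= nk_eps by rewrite /nk_eps; lra.
have step1 : ((g.+1) ^ 3)%:R * C <= (8%:R * K) ^+ 3 * C.
  apply: ler_wpM2r; first exact: C0.
  rewrite natrX; apply: lerXn2r.
  - by rewrite nnegrE; apply: ler0n.
  - by rewrite nnegrE; apply: mulr_ge0; [apply: ler0n | exact: K0].
  - by rewrite /K -natrM ler_nat.
apply: le_trans step1 _.
have step2 : (8%:R * K) ^+ 3 * C <= (K * nk_eps) ^+ 4.
  have -> : (8%:R * K) ^+ 3 * C = K ^+ 3 * (512%:R * C) by rewrite exprMn; ring.
  have -> : (K * nk_eps) ^+ 4 = K ^+ 3 * (K * nk_eps ^+ 4) by rewrite exprMn; ring.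
  apply: ler_wpM2l; first exact: exprn_ge0.
  move: hKN; rewrite /M /nk_eps => h.
  have -> : (1 / 1000%:R : R) ^+ 4 = 1 / 1000%:R ^+ 4 by rewrite expr_div_n expr1n.
  have p : (0 : R) < 1000%:R ^+ 4 by apply: exprn_gt0; lra.
  rewrite mulrA ler_pdivlMr; last exact: p.
  lra.
apply: le_trans step2 _.
have step3 : (K * nk_eps) ^+ 4 <= (1 + nk_eps) ^+ (4 * k).
  rewrite mulnC exprM; apply: lerXn2r.
  - by rewrite nnegrE; apply: mulr_ge0.
  - by rewrite nnegrE; apply: exprn_ge0; lra.
  - by apply: le_trans (nk_bern k e0); rewrite /K; lra.
apply: le_trans step3 _.
apply: ler_weXn2l; [lra | exact: h4k].
Qed.
End Final.


Section Main.
Variable R : realType.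
Local Open Scope ring_scope.
Local Notation nk_eps := (@nk_eps R).
Local Notation nk_r := (@nk_r R).
Lemma nk_main : (growth_rate R (fam (@nk_delta R)) < ((1 + Num.sqrt 5) / 2)%:E)%E.
Proof.
set beta : R := (1 + nk_eps) * (50%:R / 31%:R).
have [g0 hg0] := nk_poly (@nk_C0_ge0 R).
have r0 : (0 : R) <= nk_r by exact: nk_r_ge0.
have hc g : (g0 <= g)%N ->
    (count_genus (fam (@nk_delta R)) g)%:R <= beta ^+ g.
  move=> hg.
  have h1 := @nk_total R g.
  have h2 := hg0 g hg.
  have hs : (nk_r * (50%:R / 31%:R) : R) = 1 by rewrite /nk_r; field.
  have s0 : (0 : R) <= 50%:R / 31%:R by lra.
  set c := count_genus _ g.
  have E : (c%:R : R) = c%:R * nk_r ^+ g * (50%:R / 31%:R) ^+ g.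
    by rewrite -mulrA -exprMn hs expr1n mulr1.
  rewrite E /beta [X in _ <= X]exprMn.
  apply: ler_wpM2r; first exact: exprn_ge0.
  exact: le_trans h1 h2.
have hp g : (g0 <= g)%N -> (0 < g)%N ->
    (count_genus (fam (@nk_delta R)) g)%:R `^ (g%:R^-1) <= beta.
  move=> hg g1.
  have b0 : 0 <= beta by rewrite /beta /nk_eps; lra.
  apply: le_trans (_ : (beta ^+ g) `^ (g%:R^-1) <= _).
    apply: ge0_ler_powR; rewrite ?invr_ge0 ?ler0n ?nnegrE ?ler0n ?exprn_ge0 //.
    exact: hc.
  rewrite -powR_mulrn // -powRrM mulfV ?powRr1 //.
  by rewrite pnatr_eq0 -lt0n.
have hgr : (growth_rate R (fam (@nk_delta R)) <= beta%:E)%E.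
  rewrite /growth_rate limn_esup_lim; apply: lime_le; first exact: is_cvg_esups.
  near=> m; apply: ge_ereal_sup => _ [k /= hk <-]; rewrite lee_fin.
  apply: hp.
    apply: leq_trans hk; near: m; by exists g0.
  apply: leq_trans hk; near: m; by exists 1%N.
apply: le_lt_trans hgr _; rewrite lte_fin.
have h5 : (1382%:R / 620%:R : R) < Num.sqrt 5.
  have e : (1382%:R / 620%:R : R) = Num.sqrt ((1382%:R / 620%:R) ^+ 2).
    rewrite sqrtr_sqr ger0_norm; first by [].
    lra.
  rewrite e ltr_sqrt; last by lra.
  rewrite expr2; lra.
rewrite /beta /nk_eps; lra.
Unshelve. all: by end_near.
Qed.
End Main.

Theorem proposition12p6 (R : realType) :
  exists delta : R, (0 < delta)%R /\
    (growth_rate R (fam delta) < ((1 + Num.sqrt 5) / 2)%:E)%E.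
Proof.
exists (@nk_delta R); split; last exact: nk_main.
by rewrite /nk_delta; lra.
Qed.
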